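(* There is $k_0$ such that the following holds for every $k\geq k_0$ and every $t\leq k^{1/5}$. Every finite bipartite graph $G$ with $d(G)\geq k$ contains either (1) a subgraph $H$, bipartite with vertex classes $A$ and $B$, such that $d(H)\geq k/4$, $d_H(v)\leq k$ for every $v\in A$, and $|A|\geq k^6|B|$; or (2) a $C_4$-free subgraph with average degree at least $t$.
   Context: $d(F)=2e(F)/|V(F)|$ is the average degree and $d_H(v)$ the degree of $v$ in $H$. A graph is $C_4$-free if it contains no $4$-cycle as a subgraph. *)

(* Defs.v *)
From mathcomp Require Import all_boot.
From Stdlib Require Import Reals.
Set Implicit Arguments. Unset Strict Implicit. Unset Printing Implicit Defensive.

Section Graphs.
Variable T : finType.

(* A finite simple graph on vertex type T is a symmetric irreflexive relation e.
   Edges are 2-element sets {x,y}. *)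
Definition graph_edges (e : rel T) : {set {set T}} :=
  [set s | [exists x, exists y, [&& x != y, e x y & s == [set x; y]]]].

Definition is_subgraph (e : rel T) (V : {set T}) (F : {set {set T}}) : Prop :=
  forall s, s \in F -> exists x y, [/\ x \in V, y \in V, x != y, e x y & s = [set x; y]].

Definition avg_deg (V : {set T}) (F : {set {set T}}) : R :=
  if #|V| == 0%N then 0%R else (2 * INR #|F| / INR #|V|)%R.

Definition deg (F : {set {set T}}) (v : T) : nat := #|[set u | [set u; v] \in F]|.

Definition C4_free (F : {set {set T}}) : Prop :=
  ~ exists a b c d : T,
      [/\ uniq [:: a; b; c; d],
          [set a; b] \in F, [set b; c] \in F, [set c; d] \in F & [set d; a] \in F].

Definition bipartite (e : rel T) : Prop :=
  exists A B : {set T}, [/\ [disjoint A & B], A :|: B = setT &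
    forall x y, e x y -> (x \in A /\ y \in B) \/ (x \in B /\ y \in A)].

Definition bipartite_with (A B : {set T}) (F : {set {set T}}) : Prop :=
  [disjoint A & B] /\
  forall s, s \in F -> exists a b, [/\ a \in A, b \in B & s = [set a; b]].

End Graphs.

(* Main.v *)
Require Import Defs.
From mathcomp Require Import all_boot zify.
Set Implicit Arguments. Unset Strict Implicit. Unset Printing Implicit Defensive.

Section Gen.
Variable T : finType.

Lemma sub_card (n : nat) (A : {set T}) : n <= #|A| -> exists B : {set T}, B \subset A /\ #|B| = n.
Proof.
elim: n => [|n IH] H; first by exists set0; rewrite sub0set cards0.
have [B [BA cB]] := IH (ltnW H).
have : 0 < #|A :\: B| by rewrite cardsD (setIidPr BA) cB subn_gt0.
case/card_gt0P => a; rewrite inE => /andP [aB aA].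
exists (a |: B); split; first by rewrite subUset sub1set aA BA.
by rewrite cardsU1 aB cB.
Qed.

Lemma cardsum (A : {set T}) (P : pred T) : #|[set x in A | P x]| = \sum_(x in A) P x.
Proof.
transitivity (\sum_(x in A | P x) 1).
  by rewrite -sum1_card; apply: eq_bigl => x; rewrite inE.
by rewrite big_mkcondr; apply: eq_bigr => x _; case: (P x).
Qed.

Lemma cardsumT (P : pred T) : #|[set x | P x]| = \sum_x P x.
Proof. by rewrite -sum1dep_card big_mkcond; apply: eq_bigr => x _; case: (P x). Qed.

Lemma dc (X Y : {set T}) (S : T -> {set T}) :
  \sum_(y in Y) #|[set x in X | y \in S x]| = \sum_(x in X) #|S x :&: Y|.
Proof.
under eq_bigr => y _ do rewrite cardsum.
rewrite exchange_big /=; apply: eq_bigr => x _.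
rewrite -cardsum; apply: eq_card => y; by rewrite !inE andbC.
Qed.

End Gen.

Section Star.
Variable T : finType.
Variable e : rel T.

Lemma set2_inv (a b c d : T) : [set a; b] = [set c; d] -> (a = c /\ b = d) \/ (a = d /\ b = c).
Proof.
move=> E.
have ha : a \in [set c; d] by rewrite -E set21.
have hb : b \in [set c; d] by rewrite -E set22.
have hc : c \in [set a; b] by rewrite E set21.
have hd : d \in [set a; b] by rewrite E set22.
move: ha hb hc hd; rewrite !inE.
move=> /orP [/eqP-> | /eqP->] /orP [/eqP-> | /eqP->] /orP [/eqP hc | /eqP hc] /orP [/eqP hd | /eqP hd];
  subst; auto.
Qed.

Definition pairs (A : {set T}) (S : T -> {set T}) : {set T * T} :=
  [set p : T * T | (p.1 \in A) && (p.2 \in S p.1)].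

Definition star (A : {set T}) (S : T -> {set T}) : {set {set T}} :=
  [set [set p.1; p.2] | p in pairs A S].

Variables (A B : {set T}) (S : T -> {set T}).
Hypothesis dAB : [disjoint A & B].
Hypothesis SB : forall a, a \in A -> S a \subset B.

Lemma inAB x : x \in A -> x \in B -> False.
Proof. move=> xA xB; by move: dAB => /disjoint_setI0 /setP /(_ x); rewrite !inE xA xB. Qed.

Lemma SBm a y : a \in A -> y \in S a -> y \in B.
Proof. move=> aA; exact: (subsetP (SB aA)). Qed.

Lemma star_mem u v : [set u; v] \in star A S ->
  (u \in A /\ v \in S u) \/ (v \in A /\ u \in S v).
Proof.
case/imsetP => p; rewrite inE => /andP [p1 p2] /set2_inv [[-> ->] | [-> ->]]; auto.
Qed.

Lemma star_inv s : s \in star A S -> exists a b, [/\ a \in A, b \in S a & s = [set a; b]].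
Proof. case/imsetP => p; rewrite inE => /andP [p1 p2] ->; by exists p.1, p.2. Qed.

Lemma star_in a b : a \in A -> b \in S a -> [set a; b] \in star A S.
Proof. move=> aA bS; apply/imsetP; exists (a, b) => //; by rewrite inE /= aA bS. Qed.

Lemma star_card : #|star A S| = \sum_(a in A) #|S a|.
Proof.
rewrite card_in_imset; last first.
  move=> p q; rewrite !inE => /andP [p1 p2] /andP [q1 q2] /set2_inv [[E1 E2]|[E1 E2]].
    by case: p q E1 E2 {p1 p2 q1 q2} => ? ? [? ?] /= -> ->.
  exfalso; apply: (@inAB p.1) => //; rewrite E1; exact: SBm q2.
have -> : #|pairs A S| = \sum_(p : T * T) ((p.1 \in A) && (p.2 \in S p.1)).
  by rewrite -cardsumT.
rewrite -(pair_big xpredT xpredT (fun a b => ((a \in A) && (b \in S a)) : nat)) /=.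
rewrite (bigID (fun a => a \in A)) /= addnC big1 ?add0n; last first.
  move=> a Ha; apply: big1 => b _; by move: Ha; case: (a \in A).
apply: eq_bigr => a aA; rewrite -cardsumT; apply: eq_card => b; by rewrite !inE aA.
Qed.

Lemma star_deg a : a \in A -> deg (star A S) a = #|S a|.
Proof.
move=> aA; rewrite /deg; apply: eq_card => u; rewrite inE.
apply/idP/idP.
  case/star_mem => [[uA aS] | [_ uS]] //.
  exfalso; apply: (@inAB a) => //; exact: SBm aS.
by move=> uS; rewrite setUC; apply: star_in.
Qed.

Lemma star_sub : (forall a y, a \in A -> y \in S a -> e a y) -> is_subgraph e (A :|: B) (star A S).
Proof.
move=> He s /star_inv [a [b [aA bS ->]]]; exists a, b; split => //.
- by rewrite inE aA.
- by rewrite inE (SBm aA bS) orbT.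
- apply/eqP => ab; subst b; apply: (@inAB a) => //; exact: SBm bS.
- exact: He.
Qed.

Lemma star_bip : bipartite_with A B (star A S).
Proof.
split => // s /star_inv [a [b [aA bS ->]]]; exists a, b; split => //; exact: SBm bS.
Qed.

Lemma star_C4 : (forall a a', a \in A -> a' \in A -> a != a' -> #|S a :&: S a'| <= 1) ->
  C4_free (star A S).
Proof.
move=> H [a [b [c [d [U ab bc cd da]]]]].
move: U; rewrite /= !inE !negb_or => /and4P [/and3P [ab' ac' ad'] /andP [bc' bd'] cd' _].
have two : forall x z y1 y2, x \in A -> z \in A -> x != z -> y1 != y2 ->
   y1 \in S x -> y2 \in S x -> y1 \in S z -> y2 \in S z -> False.
  move=> x z y1 y2 xA zA xz y12 h1 h2 h3 h4.
  have := H x z xA zA xz.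
  have : y1 \in S x :&: S z by rewrite inE h1 h3.
  have : y2 \in S x :&: S z by rewrite inE h2 h4.
  move=> i2 i1; rewrite leqNgt; move/negP; apply.
  apply/card_gt1P; by exists y1, y2.
case/star_mem: ab => [[aA bS] | [bA aS]].
  case/star_mem: bc => [[bA _] | [cA bSc]].
    exfalso; apply: (@inAB b) => //; exact: SBm aA bS.
  case/star_mem: cd => [[_ dSc] | [dA cSd]]; last first.
    exfalso; apply: (@inAB c) => //; exact: SBm dA cSd.
  case/star_mem: da => [[dA _] | [_ dSa]].
    exfalso; apply: (@inAB d) => //; exact: SBm cA dSc.
  exact: (two a c b d aA cA ac' bd' bS dSa bSc dSc).
case/star_mem: bc => [[_ cSb] | [cA bSc]]; last first.
  exfalso; apply: (@inAB b) => //; exact: SBm cA bSc.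
case/star_mem: cd => [[cA _] | [dA cSd]].
  exfalso; apply: (@inAB c) => //; exact: SBm bA cSb.
case/star_mem: da => [[_ aSd] | [aA _]]; last first.
  exfalso; apply: (@inAB a) => //; exact: SBm bA aS.
exact: (two b d a c bA dA bd' ac' aS cSb aSd cSd).
Qed.

Lemma cardAB : #|A :|: B| = #|A| + #|B|.
Proof. by rewrite cardsU (disjoint_setI0 dAB) cards0 subn0. Qed.

End Star.

Section Greedy.
Variable T : finType.

Lemma indep (adj : rel T) (h : nat) : symmetric adj -> 0 < h ->
  forall D (W : {set T}), (forall v, v \in W -> #|[set z in W | adj v z]| < h) -> D * h <= #|W| ->
  exists I : {set T}, [/\ I \subset W, #|I| = D &
     forall u v, u \in I -> v \in I -> u != v -> ~~ adj u v].
Proof.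
move=> sym hpos; elim=> [|D IH] W Hdeg Hcard.
  by exists set0; split => //; [rewrite sub0set | rewrite cards0 | move=> u v; rewrite inE].
have : 0 < #|W| by move: Hcard; rewrite mulSn; move: hpos; lia.
case/card_gt0P => v vW.
set Nv := [set z in W | adj v z].
set W' := W :\: (v |: Nv).
have cW' : D * h <= #|W'|.
  have h1 : #|W :&: (v |: Nv)| <= h.
    apply: leq_trans (subset_leq_card (subsetIr _ _)) _.
    rewrite cardsU1.
    have := Hdeg v vW; rewrite -/Nv; case: (v \in Nv) => /=; lia.
  rewrite /W' cardsD; move: Hcard h1; rewrite mulSn; lia.
have Hdeg' : forall u, u \in W' -> #|[set z in W' | adj u z]| < h.
  move=> u uW; apply: leq_ltn_trans (Hdeg u (subsetP (subsetDl _ _) u uW)).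
  apply: subset_leq_card; apply/subsetP => z; rewrite !inE.
  by case/andP => /andP [_ ->] ->.
have [I' [I'W cI' indI']] := IH W' Hdeg' cW'.
have vI' : v \notin I'.
  apply/negP => /(subsetP I'W); by rewrite /W' !inE eqxx.
have notadj : forall w, w \in I' -> ~~ adj v w.
  move=> w /(subsetP I'W); rewrite /W' !inE negb_or => /andP [/andP [_ H] wW].
  apply/negP => avw; move: H; by rewrite wW avw.
exists (v |: I'); split.
- by rewrite subUset sub1set vW (subset_trans I'W (subsetDl _ _)).
- by rewrite cardsU1 vI' cI'.
move=> u w; rewrite !inE => /orP [/eqP -> | uI] /orP [/eqP -> | wI].
- by rewrite eqxx.
- by move=> _; apply: notadj.
- by move=> _; rewrite sym; apply: notadj.
- exact: indI'.
Qed.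


Lemma sum_ind (S : {set T}) : \sum_z ((z \in S) : nat) = #|S|.
Proof. by rewrite -sum1_card big_mkcond [RHS]big_mkcond; apply: eq_bigr => z _; case: (z \in S). Qed.

Lemma sum_in_ind (S : {set T}) (f : T -> nat) :
  \sum_(z in S) f z = \sum_z (z \in S) * f z.
Proof. by rewrite big_mkcond [RHS]big_mkcond; apply: eq_bigr => z _; case: (z \in S); rewrite ?mul1n ?mul0n. Qed.

Lemma leq_sum_sub (A B : {set T}) (f : T -> nat) : A \subset B ->
  \sum_(x in A) f x <= \sum_(x in B) f x.
Proof.
move=> AB; rewrite [X in _ <= X](big_setID A) /= (setIidPr AB); exact: leq_addr.
Qed.

Lemma greedy (X3 Y : {set T}) (N3 : T -> {set T}) (D h0 Lam del : nat) :
  (forall x, x \in X3 -> N3 x \subset Y /\ del <= #|N3 x|) ->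
  (forall y, y \in Y -> #|[set x in X3 | y \in N3 x]| <= Lam) ->
  0 < h0 -> 2 * (D * h0) <= del ->
  exists (C : {set T}) (S : T -> {set T}),
    [/\ C \subset X3, (forall c, c \in C -> S c \subset N3 c /\ #|S c| = D),
     (forall c c', c \in C -> c' \in C -> c != c' -> #|S c :&: S c'| <= 1) &
     #|X3 :\: C| * (del * h0) <= 2 * (#|C| * (D * D) * Lam)].
Proof.
move=> HN3 Hcod h0pos Hdel.
pose validb (p : {set T} * {ffun T -> {set T}}) :=
  [&& p.1 \subset X3, [forall c in p.1, (p.2 c \subset N3 c) && (#|p.2 c| == D)] &
      [forall c in p.1, [forall c' in p.1, (c != c') ==> (#|p.2 c :&: p.2 c'| <= 1)]]].
have v0 : validb (set0, [ffun _ => set0]).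
  rewrite /validb /= sub0set /=; apply/andP; split; apply/forall_inP => c; by rewrite inE.
case: (arg_maxnP (fun p : {set T} * {ffun T -> {set T}} => #|p.1|) v0) => [[C Sf]] /and3P [CX /forall_inP HS /forall_inP Hpair] Hmax.
simpl in *.
exists C, Sf; split => //.
- move=> c cC; have /andP [a b] := HS c cC; split; [exact a| exact/eqP].
- move=> c c' cC c'C ne; have := Hpair c cC => /forall_inP /(_ c' c'C); by rewrite ne.
pose adj := fun y z : T => (y != z) && [exists c in C, (y \in Sf c) && (z \in Sf c)].
have sym : symmetric adj.
  move=> y z; rewrite /adj eq_sym; congr (_ && _).
  by apply/existsP/existsP => [] [c /andP [cC /andP [a b]]]; exists c; rewrite cC a b.
have noind : forall x, x \in X3 -> x \notin C -> forall I : {set T}, I \subset N3 x -> #|I| = D ->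
    ~ (forall u v, u \in I -> v \in I -> u != v -> ~~ adj u v).
  move=> x xX xC I IN cI Hind.
  pose q := (x |: C, [ffun z => if z == x then I else Sf z]).
  have vq : validb q.
    apply/and3P; split => /=.
    - by rewrite subUset sub1set xX CX.
    - apply/forall_inP => c; rewrite !inE ffunE => /orP [/eqP -> | cC].
        by rewrite eqxx IN cI eqxx.
      have -> : (c == x) = false by apply/negbTE; apply: contraNneq xC => <-.
      exact: HS.
    - have key : forall c, c \in C -> #|I :&: Sf c| <= 1.
        move=> c cC; rewrite leqNgt; apply/negP => /card_gt1P [u [v [uI vI uv]]].
        move: uI vI; rewrite !inE => /andP [uI uS] /andP [vI vS].
        have := Hind u v uI vI uv; rewrite /adj uv /=; move/negP; apply.
        by apply/existsP; exists c; rewrite cC uS vS.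
      apply/forall_inP => c cxC; apply/forall_inP => c' c'xC; apply/implyP => cc'.
      rewrite !ffunE.
      move: cxC c'xC cc'; rewrite !inE => /orP [/eqP -> | cC] /orP [/eqP -> | c'C] cc'.
      + by rewrite eqxx in cc'.
      + rewrite eqxx; have -> : (c' == x) = false by apply/negbTE; apply: contraNneq xC => <-.
        exact: key.
      + have -> : (c == x) = false by apply/negbTE; apply: contraNneq xC => <-.
        rewrite eqxx setIC; exact: key.
      + have -> : (c == x) = false by apply/negbTE; apply: contraNneq xC => <-.
        have -> : (c' == x) = false by apply/negbTE; apply: contraNneq xC => <-.
        have := Hpair c cC => /forall_inP /(_ c' c'C); by rewrite cc'.
  have := Hmax q vq; by rewrite /= cardsU1 xC ltnn.
pose E := fun x => \sum_(y in N3 x) #|[set z in N3 x | adj y z]|.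
have lowE : forall x, x \in X3 :\: C -> del * h0 <= 2 * E x.
  move=> x; rewrite inE => /andP [xC xX].
  have [NY Ndel] := HN3 x xX.
  pose Ulow := [set y in N3 x | #|[set z in N3 x | adj y z]| < h0].
  have cU : #|Ulow| < D * h0.
    rewrite ltnNge; apply/negP => H.
    have degs : forall v, v \in Ulow -> #|[set z in Ulow | adj v z]| < h0.
      move=> v; rewrite inE => /andP [_ Hv]; apply: leq_ltn_trans Hv.
      apply: subset_leq_card; apply/subsetP => z; rewrite !inE.
      by case/andP => /andP [-> _] ->.
    have [I [IU cI indI]] := indep sym h0pos degs H.
    apply: (noind x xX xC I _ cI indI).
    apply: subset_trans IU _; apply/subsetP => z; rewrite inE; by case/andP.
  have E1 : #|N3 x :\: Ulow| * h0 <= E x.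
    rewrite /E (bigID (fun y => y \in Ulow)) /= .
    apply: leq_trans (leq_addl _ _).
    rewrite -sum_nat_const.
    rewrite [X in X <= _](eq_bigl (fun y => (y \in N3 x) && (y \notin Ulow))); last first.
      by move=> y; rewrite !inE andbC.
    apply: leq_sum => y /andP [yN yU]; move: yU; by rewrite inE yN /= -leqNgt.
  have E2 : #|N3 x :\: Ulow| = #|N3 x| - #|Ulow|.
    rewrite cardsD; congr (_ - _); apply: eq_card => z; rewrite !inE.
    by apply/andP/andP => [[a /andP [b c]]| [b c]]; [split | split => //; apply/andP].
  rewrite E2 in E1.
  have E3 : (del - D * h0) * h0 <= (#|N3 x| - #|Ulow|) * h0.
    rewrite leq_mul2r; apply/orP; right; move: cU Ndel; lia.
  have E4 : del * h0 <= 2 * ((del - D * h0) * h0).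
    rewrite mulnA leq_mul2r; apply/orP; right; move: Hdel; lia.
  apply: leq_trans E4 _; rewrite leq_mul2l; apply/orP; right; exact: leq_trans E3 E1.
have upE : \sum_(x in X3 :\: C) E x <= #|C| * (D * D) * Lam.
  have Eform : forall x, E x = \sum_y \sum_z (((y \in N3 x) && (z \in N3 x)) && adj y z : nat).
    move=> x; rewrite /E sum_in_ind; apply: eq_bigr => y _.
    rewrite cardsumT big_distrr /=; apply: eq_bigr => z _.
    by case: (y \in N3 x); case: (z \in N3 x); case: (adj y z).
  under eq_bigr => x _ do rewrite Eform.
  rewrite exchange_big /=.
  under eq_bigr => y _ do rewrite exchange_big /=.
  apply: (@leq_trans (\sum_y \sum_z (adj y z : nat) * Lam)).
    apply: leq_sum => y _; apply: leq_sum => z _.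
    case: (adj y z); last by rewrite mul0n leqn0 sum_nat_eq0; apply/forall_inP => x _; rewrite andbF.
    rewrite mul1n.
    case: (boolP (y \in Y)) => yY.
      apply: leq_trans (Hcod y yY).
      rewrite cardsum; apply: leq_trans (leq_sum_sub _ (subsetDl X3 C)) _.
      apply: leq_sum => x _; by case: (y \in N3 x); case: (z \in N3 x).
    apply: leq_trans (leq0n _ ); apply: eq_leq; apply/eqP; rewrite sum_nat_eq0.
    apply/forall_inP => x; rewrite inE => /andP [_ xX].
    have [NY _] := HN3 x xX.
    have -> : (y \in N3 x) = false.
      apply/negbTE; apply: contra yY; exact: (subsetP NY).
    by [].
  under eq_bigr => y _ do rewrite -big_distrl /=.
  rewrite -big_distrl /= leq_mul2r; apply/orP; right.
  apply: (@leq_trans (\sum_y \sum_z \sum_(c in C) ((y \in Sf c) && (z \in Sf c) : nat))).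
    apply: leq_sum => y _; apply: leq_sum => z _.
    rewrite /adj; case: (y != z) => //=.
    case: existsP => // [[c /andP [cC yz]]].
    by rewrite (bigD1 c) //= yz leq_addr.
  under eq_bigr => y _ do rewrite exchange_big /=.
  rewrite exchange_big /= (eq_bigr (fun c => D * D)).
    by rewrite sum_nat_const mulnC.
  move=> c cC.
  under eq_bigr => z _ do under eq_bigr => y _ do rewrite -mulnb.
  under eq_bigr => z _ do rewrite -big_distrr /= sum_ind.
  rewrite -big_distrl /= sum_ind.
  have /andP [_ /eqP ->] := HS c cC; by [].
have H : \sum_(x in X3 :\: C) (del * h0) <= \sum_(x in X3 :\: C) 2 * E x by apply: leq_sum.
move: H; rewrite sum_nat_const -big_distrr /= => H; apply: leq_trans H _; rewrite leq_mul2l upE orbT //.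
Qed.

End Greedy.

Lemma final_arith (a b c y m D K Q P : nat) :
  0 < a -> a <= 100 * b -> y <= 2 * a -> Q * y <= m * a -> 0 < Q ->
  (b - c) * P <= 2 * (c * (D * D) * (Q * K)) -> 400 * m * D * (K * K) <= P -> 0 < P ->
  401 * K <= 2 * D ->
  K * (c + y) <= 2 * D * c /\ 0 < c.
Proof.
move=> a0 ab ya Qy Q0 F4 F5 P0 KD.
have b0 : 0 < b by lia.
have c0 : 0 < c.
  rewrite lt0n; apply/negP => /eqP c0; subst c.
  move: F4; rewrite !mul0n muln0 subn0 leqn0 muln_eq0; lia.
split => //.
case: (leqP (2 * (D * D * (Q * K))) P) => HP.
  have : (b - c) * P <= c * P.
    apply: leq_trans F4 _.
    have : c * (2 * (D * D * (Q * K))) <= c * P by rewrite leq_mul2l HP orbT.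
    lia.
  rewrite leq_mul2r (negbTE (lt0n_neq0 P0)) /= => H.
  have yc : c + y <= 401 * c by lia.
  apply: leq_trans (_ : K * (401 * c) <= _); first by rewrite leq_mul2l yc orbT.
  have : 401 * K * c <= 2 * D * c by rewrite leq_mul2r KD orbT.
  lia.
have H1 : b * P <= 4 * (c * (D * D) * (Q * K)).
  have : b * P <= c * P + 2 * (c * (D * D) * (Q * K)).
    move: F4; rewrite mulnBl; lia.
  move=> H; apply: leq_trans H _.
  have : c * P <= c * (2 * (D * D * (Q * K))).
    rewrite leq_mul2l; apply/orP; right; apply: ltnW; exact: HP.
  lia.
have H2 : a * P <= 400 * (c * (D * D) * (Q * K)).
  apply: leq_trans (_ : 100 * (b * P) <= _); first by rewrite mulnA leq_mul2r ab orbT.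
  rewrite (_ : 400 = 100 * 4) // -mulnA leq_mul2l H1 orbT //.
have H3 : Q * (y * P) <= Q * (400 * m * c * (D * D) * K).
  rewrite mulnA; apply: leq_trans (_ : m * a * P <= _); first by rewrite leq_mul2r Qy orbT.
  rewrite -mulnA; apply: leq_trans (_ : m * (400 * (c * (D * D) * (Q * K))) <= _).
    by rewrite leq_mul2l H2 orbT.
  apply: eq_leq; lia.
rewrite leq_pmul2l // in H3.
have H4 : K * y * P <= D * c * P.
  apply: leq_trans (_ : K * (400 * m * c * (D * D) * K) <= _).
    by rewrite -mulnA leq_mul2l H3 orbT.
  apply: leq_trans (_ : D * c * (400 * m * D * (K * K)) <= _); last by rewrite leq_mul2l F5 orbT.
  apply: eq_leq; lia.
rewrite leq_pmul2r // in H4.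
have : K * c <= D * c by rewrite leq_mul2r; apply/orP; right; lia.
lia.
Qed.

Lemma L_aux (m N C M K4 : nat) : 2 * m <= N -> C <= M -> M * K4 <= N -> C * (2 * m * K4) <= N * N.
Proof.
move=> m2 CM HN.
have a : C * (2 * m * K4) <= C * (N * K4) by rewrite leq_mul2l leq_mul2r m2 !orbT.
have c : C * K4 * N <= M * K4 * N by rewrite leq_mul2r leq_mul2r CM !orbT.
have d : M * K4 * N <= N * N by rewrite leq_mul2r HN orbT.
lia.
Qed.

Lemma arithP (N K : nat) : 0 < K -> 1000 * 1000 * 1000 * 1000 * 1000 * 1000 * (K * K * K * K) <= N ->
  400 * (N %/ 2) * (500 * K) * (K * K) <= (N %/ 300) * ((N %/ 300) %/ (2 * (500 * K))).
Proof.
move=> K0 HN.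
set del := N %/ 300; set D := 500 * K; set h0 := del %/ (2 * D); set m := N %/ 2.
have K4 : K <= K * K * K * K.
  rewrite -!mulnA; apply: leq_pmulr; rewrite !muln_gt0 K0 //.
have NK : 1000 * 1000 * 1000 * 1000 * 1000 * 1000 * K <= N.
  apply: leq_trans HN; rewrite leq_mul2l K4 orbT //.
have h1 : N <= 600 * del by rewrite /del; lia.
have h2 : del <= 2 * (2 * D) * h0.
  have e := divn_eq del (2 * D).
  have r := ltn_pmod del (_ : 0 < 2 * D).
  have dD : 4 * D <= del by rewrite /del /D; lia.
  rewrite -/h0 in e r; lia.
have m2 : 2 * m <= N by rewrite /m; lia.
have L : (2 * (2 * D)) * (600 * 600) * (400 * m * D * (K * K)) <= N * N.
  have E : (2 * (2 * D)) * (600 * 600) * (400 * m * D * (K * K)) =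
           (2 * 600 * 600 * 400 * 500 * 500) * ((2 * m) * (K * K * K * K)) by rewrite /D; lia.
  rewrite E; apply: (@L_aux m N _ (1000 * 1000 * 1000 * 1000 * 1000 * 1000)); [exact: m2 | lia | exact: HN].
have R : N * N <= (2 * (2 * D)) * (600 * 600) * (del * h0).
  apply: leq_trans (_ : (600 * del) * (600 * del) <= _); first exact: leq_mul.
  apply: leq_trans (_ : (600 * 600 * del) * (2 * (2 * D) * h0) <= _).
    rewrite (_ : 600 * del * (600 * del) = 600 * 600 * del * del); last by lia.
    by rewrite leq_mul2l h2 orbT.
  apply: eq_leq; lia.
have := leq_trans L R; rewrite leq_pmul2l; [by [] | rewrite /D; lia].
Qed.

Lemma ar3 (N a b : nat) : 1000 <= N ->
  a * ((N %/ 2).+1 - N %/ 7) <= 41 * (b * (N %/ 2) + a * (N %/ 300)) -> a <= 100 * b.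
Proof.
move=> N1 H.
set m := N %/ 2 in H *; set r := N %/ 7 in H *; set del := N %/ 300 in H *.
set z := m.+1 - r - 41 * del.
have ez : m.+1 - r = z + 41 * del by rewrite /z /m /r /del; lia.
have hz : 41 * m <= 100 * z by rewrite /z /m /r /del; lia.
have m0 : 0 < m by rewrite /m; lia.
rewrite ez mulnDr in H.
have H1 : a * z <= 41 * (b * m) by lia.
have H2 : m * (41 * a) <= m * (4100 * b).
  have : (41 * m) * a <= (100 * z) * a by rewrite leq_mul2r hz orbT.
  have : 100 * (a * z) <= 100 * (41 * (b * m)) by rewrite leq_mul2l H1 orbT.
  lia.
rewrite leq_pmul2l // in H2; lia.
Qed.

Section Core.
Variable T : finType.

Definition pickc (A : {set T}) (n : nat) : {set T} :=
  odflt set0 [pick B : {set T} | (B \subset A) && (#|B| == n)].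

Lemma pickcP (A : {set T}) n : n <= #|A| -> pickc A n \subset A /\ #|pickc A n| = n.
Proof.
move=> H; rewrite /pickc; case: pickP => [B /andP [BA /eqP cB] | H'] //=.
have [B [BA cB]] := sub_card H.
by move: (H' B); rewrite BA cB eqxx.
Qed.

Lemma core (K N : nat) (X Y : {set T}) (N0 : T -> {set T}) :
  1000 * 1000 * 1000 * 1000 * 1000 * 1000 * 1000 <= K ->
  K ^ 5 <= 32 * N -> N < K ^ 5 ->
  [disjoint X & Y] -> #|Y| <= #|X| -> 0 < #|X| ->
  (forall x, x \in X -> N0 x \subset Y /\ N %/ 2 <= #|N0 x|) ->
  (exists (A B : {set T}) (S : T -> {set T}),
     [/\ A \subset X, B \subset Y, 0 < #|A|,
         (forall a, a \in A -> S a \subset N0 a :&: B /\ #|S a| = N %/ 7) &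
         N.+1 ^ 6 * #|B| <= #|A|])
  \/
  (exists (C V : {set T}) (S : T -> {set T}),
     [/\ C \subset X, V \subset Y,
         (forall c, c \in C -> S c \subset N0 c :&: V /\ #|S c| = 500 * K),
         (forall c c', c \in C -> c' \in C -> c != c' -> #|S c :&: S c'| <= 1) &
         K * (#|C| + #|V|) <= 2 * (500 * K) * #|C| /\ 0 < #|C|]).
Proof.
move=> hK hN1 hN2 dXY hYX hX HN0.
have K5 : K ^ 5 = K * (K * K * K * K) by rewrite !expnS expn0; lia.
have HNK4 : 1000 * 1000 * 1000 * 1000 * 1000 * 1000 * (K * K * K * K) <= N.
  have a : 1000 * 1000 * 1000 * 1000 * 1000 * 1000 * 1000 * (K * K * K * K) <= K * (K * K * K * K).
    by rewrite leq_mul2r hK orbT.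
  rewrite K5 in hN1; lia.
have K1 : 2 <= K by lia.
have K4 : K <= K * K * K * K.
  rewrite -!mulnA; apply: leq_pmulr; rewrite !muln_gt0; lia.
have NK : 1000 * 1000 * 1000 * 1000 * 1000 * 1000 * K <= N.
  apply: leq_trans HNK4; rewrite leq_mul2l K4 orbT; by [].
set m := N %/ 2. set r := N %/ 7. set L := N.+1 ^ 8.
pose N' := fun x => pickc (N0 x) m.
have HN' : forall x, x \in X -> N' x \subset Y /\ #|N' x| = m.
  move=> x xX; have [a b] := HN0 x xX; have [c d] := pickcP b.
  split; [exact: subset_trans c a | exact: d].
pose d' := fun y => #|[set x in X | y \in N' x]|.
have sumd' : \sum_(y in Y) d' y = m * #|X|.
  rewrite /d' dc (eq_bigr (fun _ => m)); first by rewrite sum_nat_const mulnC.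
  move=> x xX; have [a b] := HN' x xX; by rewrite (setIidPl a) b.
pose Yh := [set y in Y | L < d' y].
have YhY : Yh \subset Y by apply/subsetP => y; rewrite inE; case/andP.
have cYh : L.+1 * #|Yh| <= m * #|X|.
  rewrite -sumd' mulnC -sum_nat_const.
  apply: leq_trans (leq_sum_sub _ YhY).
  apply: leq_sum => y; rewrite inE; by case/andP.
pose A := [set x in X | r <= #|N' x :&: Yh|].
have AX : A \subset X by apply/subsetP => x; rewrite inE; case/andP.
case: (boolP ((0 < #|A|) && (N.+1 ^ 6 * #|Yh| <= #|A|))) => [/andP [A0 HA] | HA].
  left; exists A, Yh, (fun a => pickc (N' a :&: Yh) r); split => //.
  move=> a; rewrite inE => /andP [aX ra]; have [c d] := pickcP ra.
  split => //; apply: subset_trans c _; apply: setSI.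
  by rewrite /N'; have [] := pickcP (proj2 (HN0 a aX)).
right.
have mN : m <= N by rewrite /m; lia.
have A2 : 2 * #|A| <= #|X|.
  move: HA; rewrite negb_and -leqNgt -ltnNge leqn0 => /orP [/eqP -> | HA]; first by rewrite muln0.
  have H1 : #|A| * N.+1 ^ 2 < N.+1 ^ 8 * #|Yh|.
    have -> : N.+1 ^ 8 = N.+1 ^ 6 * N.+1 ^ 2 by rewrite -expnD.
    by rewrite mulnAC ltn_pmul2r ?expn_gt0.
  have H2 : N.+1 ^ 8 * #|Yh| <= N * #|X|.
    apply: leq_trans (_ : L.+1 * #|Yh| <= _); first by rewrite leq_mul2r leqnSn orbT.
    apply: leq_trans cYh _; by rewrite leq_mul2r mN orbT.
  have H3 : 2 * N <= N.+1 ^ 2 by rewrite expnS expn1; nia.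
  have H4 : #|A| * (2 * N) < #|X| * N.
    apply: (@leq_ltn_trans (#|A| * N.+1 ^ 2)); first by rewrite leq_mul2l H3 orbT.
    apply: leq_trans H1 _; by rewrite [#|X| * N]mulnC.
  have Npos : 0 < N by lia.
  have H5 : 2 * #|A| * N < #|X| * N by lia.
  rewrite ltn_pmul2r in H5; [lia | exact: Npos].
pose X1 := X :\: A.
have X1X : X1 \subset X by apply: subsetDl.
have cX1 : #|X| <= 2 * #|X1|.
  rewrite /X1 cardsD (setIidPr AX); lia.
pose Yl := Y :\: Yh.
pose N2 := fun x => N' x :\: Yh.
have HN2 : forall x, x \in X1 -> N2 x \subset Yl /\ m < #|N2 x| + r.
  move=> x; rewrite !inE => /andP [xA xX]; have [a b] := HN' x xX.
  split; first by apply: setSD.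
  move: xA; rewrite xX /= -ltnNge => xA.
  rewrite /N2 cardsD b; move: (subset_leq_card (subsetIl (N' x) Yh)); rewrite b; lia.
have N2N' : forall x, N2 x \subset N' x by move=> x; apply: subsetDl.
pose d2 := fun y => #|[set x in X1 | y \in N2 x]|.
have d2le : forall y, y \in Yl -> d2 y <= L.
  move=> y; rewrite !inE => /andP [yh yY].
  have : d' y <= L by move: yh; rewrite yY /= -leqNgt.
  apply: leq_trans; apply: subset_leq_card; apply/subsetP => x; rewrite inE => /andP [xX1 yN].
  rewrite inE (subsetP X1X x xX1) /=; exact: (subsetP (N2N' x) y yN).
pose cls := fun y => trunc_log K (d2 y).
have cls41 : forall y, y \in Yl -> 0 < d2 y -> cls y < 41.
  move=> y yl d0; rewrite ltnNge; apply/negP => H.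
  have LK : L <= K ^ 40.
    rewrite /L (_ : 40 = 5 * 8) // expnM leq_exp2r //.
  have := trunc_logP K1 d0; rewrite -/(cls y) => H1.
  have : K ^ 41 <= K ^ 40.
    apply: leq_trans (_ : K ^ cls y <= _); first by rewrite leq_pexp2l //; lia.
    apply: leq_trans H1 _; apply: leq_trans (d2le y yl) LK.
  have h41 : K ^ 40 < K ^ 41 by rewrite ltn_exp2l.
  move=> H2; have := leq_trans h41 H2; by rewrite ltnn.
pose Yc := fun j : 'I_41 => [set y in Yl | (0 < d2 y) && (cls y == j)].
pose ej := fun j : 'I_41 => \sum_(x in X1) #|N2 x :&: Yc j|.
have part : forall x, x \in X1 -> \sum_(j < 41) #|N2 x :&: Yc j| = #|N2 x|.
  move=> x xX1.
  have [N2l _] := HN2 x xX1.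
  have memN2 : forall y, y \in N2 x -> [/\ y \in Yl, 0 < d2 y & cls y < 41].
    move=> y yN; have yl := subsetP N2l y yN.
    have d0 : 0 < d2 y by apply/card_gt0P; exists x; rewrite inE xX1 yN.
    split => //; exact: cls41.
  have E : forall j : 'I_41, #|N2 x :&: Yc j| = \sum_(y in N2 x) ((cls y == j) : nat).
    move=> j; rewrite -cardsum; apply: eq_card => y.
    rewrite in_setI [in RHS]in_set.
    case: (boolP (y \in N2 x)) => yN //=.
    have [yl d0 _] := memN2 y yN.
    by rewrite /Yc in_set yl d0.
  rewrite (eq_bigr _ (fun j _ => E j)) exchange_big /= -sum1_card.
  apply: eq_bigr => y yN; have [_ _ c41] := memN2 y yN.
  rewrite (bigD1 (Ordinal c41)) //= eqxx big1 // => i ne.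
  case: eqP => // Ei; exfalso; move/eqP: ne; apply; apply: val_inj; by rewrite /= Ei.
have tot : \sum_(j < 41) ej j = \sum_(x in X1) #|N2 x|.
  rewrite /ej exchange_big /=; apply: eq_bigr => x xX1; exact: part.
have lowtot : #|X1| * (m.+1 - r) <= \sum_(x in X1) #|N2 x|.
  rewrite -sum_nat_const; apply: leq_sum => x xX1; have [_ h] := HN2 x xX1; lia.
pose jm := [arg max_(j > (ord0 : 'I_41)) ej j].
have jmax : forall j, ej j <= ej jm.
  rewrite /jm; case: arg_maxnP => // i _ H j; exact: H.
have pig : \sum_(x in X1) #|N2 x| <= 41 * ej jm.
  rewrite -tot; apply: leq_trans (_ : \sum_(j < 41) ej jm <= _).
    by apply: leq_sum => j _; exact: jmax.
  by rewrite sum_nat_const card_ord.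
set Yj := Yc jm.
set j := nat_of_ord jm.
pose N3 := fun x => N2 x :&: Yj.
pose del := N %/ 300.
pose X3 := [set x in X1 | del <= #|N3 x|].
have X3X1 : X3 \subset X1 by apply/subsetP => x; rewrite inE; case/andP.
have ejsplit : ej jm <= \sum_(x in X3) #|N3 x| + #|X1| * del.
  rewrite /ej (big_setID X3) /= (setIidPr X3X1) leq_add2l.
  apply: leq_trans (_ : \sum_(x in X1 :\: X3) del <= _).
    apply: leq_sum => x; rewrite in_setD => /andP [xX3 xX1].
    move: xX3; rewrite in_set xX1 /= -ltnNge; exact: ltnW.
  rewrite sum_nat_const leq_mul2r; apply/orP; right.
  apply: subset_leq_card; exact: subsetDl.
have N3N' : forall x, N3 x \subset N' x.
  move=> x; apply: subset_trans (N2N' x); exact: subsetIl.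
have X3m : \sum_(x in X3) #|N3 x| <= #|X3| * m.
  rewrite -sum_nat_const; apply: leq_sum => x xX3.
  have xX : x \in X by apply: (subsetP X1X); apply: (subsetP X3X1).
  have [_ <-] := HN' x xX; apply: subset_leq_card; exact: N3N'.
have cX3 : #|X1| <= 100 * #|X3|.
  apply: (@ar3 N); first lia.
  apply: leq_trans lowtot _; apply: leq_trans pig _.
  rewrite leq_mul2l; apply/orP; right.
  apply: leq_trans ejsplit _; rewrite leq_add2r; exact: X3m.
have Yjmem : forall y, y \in Yj -> [/\ y \in Yl, 0 < d2 y & cls y = j].
  move=> y; rewrite /Yj /Yc in_set => /andP [yl /andP [d0 /eqP c]]; by split.
have Yjcard : K ^ j * #|Yj| <= m * #|X1|.
  rewrite mulnC -sum_nat_const.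
  apply: leq_trans (_ : \sum_(y in Yj) d2 y <= _).
    apply: leq_sum => y yj; have [_ d0 c] := Yjmem y yj.
    have := trunc_logP K1 d0; by rewrite -/(cls y) c.
  rewrite /d2 dc; apply: leq_trans (_ : \sum_(x in X1) #|N2 x| <= _).
    apply: leq_sum => x _; apply: subset_leq_card; exact: subsetIl.
  rewrite mulnC -sum_nat_const; apply: leq_sum => x xX1.
  have [_ <-] := HN' x (subsetP X1X x xX1); apply: subset_leq_card; exact: N2N'.
have codeg : forall y, y \in Yj -> #|[set x in X3 | y \in N3 x]| <= K ^ j.+1.
  move=> y yj; have [_ d0 c] := Yjmem y yj.
  apply: leq_trans (_ : d2 y <= _).
    apply: subset_leq_card; apply/subsetP => x; rewrite in_set => /andP [xX3 yN]; rewrite in_set.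
    rewrite (subsetP X3X1 x xX3) /=; move: yN; rewrite in_setI; by case/andP.
  apply: ltnW; have := trunc_log_ltn (d2 y) K1; by rewrite -/(cls y) c.
pose D := 500 * K.
pose h0 := del %/ (2 * D).
have h0pos : 0 < h0.
  rewrite /h0 divn_gt0; last by rewrite /D; lia.
  rewrite /del /D; lia.
have hdel : 2 * (D * h0) <= del.
  rewrite mulnA mulnC /h0; exact: leq_trunc_div.
have HN3 : forall x, x \in X3 -> N3 x \subset Yj /\ del <= #|N3 x|.
  move=> x; rewrite in_set => /andP [_ h]; split => //; exact: subsetIr.
have [C [S [CX3 HS Hpair Hmain]]] := greedy HN3 codeg h0pos hdel.
exists C, Yj, S; split.
- apply: subset_trans CX3 _; apply: subset_trans X3X1 X1X.
- apply/subsetP => y yj; have [yl _ _] := Yjmem y yj; move: yl; rewrite in_setD; by case/andP.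
- move=> c cC; have [Sc cS] := HS c cC; split => //.
  have cX : c \in X by apply: (subsetP X1X); apply: (subsetP X3X1); exact: (subsetP CX3).
  apply: subset_trans Sc _; apply/subsetP => y; rewrite /N3 in_setI => /andP [y2 yj].
  rewrite in_setI yj andbT.
  have [N'N0 _] := pickcP (proj2 (HN0 c cX)).
  exact: (subsetP N'N0 y (subsetP (N2N' c) y y2)).
- exact: Hpair.
have YjY : Yj \subset Y.
  apply/subsetP => y yj; have [yl _ _] := Yjmem y yj; move: yl; rewrite in_setD; by case/andP.
rewrite cardsD (setIidPr CX3) expnSr in Hmain.
apply: (@final_arith #|X1| #|X3| #|C| #|Yj| m D K (K ^ j) (del * h0)).
- lia.
- exact: cX3.
- have := subset_leq_card YjY; lia.
- exact: Yjcard.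
- by rewrite expn_gt0 ltnW.
- exact: Hmain.
- exact: (arithP (ltnW K1) HNK4).
- rewrite muln_gt0 h0pos andbT /del; lia.
- rewrite /D; lia.
Qed.

End Core.

Section Deg.
Variable T : finType.
Variable e : rel T.
Hypothesis sym : symmetric e.
Hypothesis irr : irreflexive e.

Lemma edges_le : 2 * #|graph_edges e| <= \sum_v #|[set u | e v u]|.
Proof.
pose P2 := [set p : T * T | e p.1 p.2].
have cP2 : #|P2| = \sum_v #|[set u | e v u]|.
  rewrite /P2 cardsumT -(pair_big xpredT xpredT (fun a b => e a b : nat)) /=.
  apply: eq_bigr => v _; by rewrite cardsumT.
pose Plt := [set p in P2 | enum_rank p.1 < enum_rank p.2].
pose Pgt := [set p in P2 | enum_rank p.2 < enum_rank p.1].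
pose f := fun p : T * T => [set p.1; p.2].
have key : forall x y, x != y -> e x y -> enum_rank x < enum_rank y ->
    [set x; y] \in f @: Plt /\ [set x; y] \in f @: Pgt.
  move=> x y xy exy H; split.
    apply/imsetP; exists (x, y) => //; by rewrite !inE /= exy H.
  apply/imsetP; exists (y, x); first by rewrite !inE /= sym exy H.
  by rewrite /f /= setUC.
have sub : forall Q, Q = Plt \/ Q = Pgt -> graph_edges e \subset f @: Q.
  move=> Q HQ; apply/subsetP => s; rewrite inE => /existsP [x /existsP [y /and3P [xy exy /eqP ->]]].
  case: (ltngtP (enum_rank x) (enum_rank y)) => H.
  - by have [h1 h2] := key x y xy exy H; case: HQ => ->.
  - have yx : y != x by rewrite eq_sym.
    have eyx : e y x by rewrite sym.
    have [h1 h2] := key y x yx eyx H.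
    by rewrite setUC; case: HQ => ->.
  - exfalso; move/eqP: xy; apply; apply: enum_rank_inj; exact: val_inj.
have c1 : #|graph_edges e| <= #|Plt| := leq_trans (subset_leq_card (sub Plt (or_introl erefl))) (leq_imset_card _ _).
have c2 : #|graph_edges e| <= #|Pgt| := leq_trans (subset_leq_card (sub Pgt (or_intror erefl))) (leq_imset_card _ _).
have c3 : #|Plt| + #|Pgt| <= #|P2|.
  rewrite -cardsUI.
  have -> : Plt :&: Pgt = set0.
    apply/setP => p; rewrite !inE; apply/negP => /andP [/andP [_ a] /andP [_ b]].
    by move: (ltn_trans a b); rewrite ltnn.
  rewrite cards0 addn0; apply: subset_leq_card; apply/subsetP => p; rewrite !inE.
  by case/orP => /andP [].
lia.
Qed.


Definition nb (W : {set T}) (v : T) : {set T} := [set u in W | e v u].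
Definition sW (W : {set T}) := \sum_(v in W) #|nb W v|.

Lemma sW_del (W : {set T}) (v : T) : v \in W -> sW W = sW (W :\ v) + 2 * #|nb W v|.
Proof.
move=> vW; rewrite /sW (big_setD1 v vW) /=.
have E : forall u, u \in W :\ v -> #|nb W u| = #|nb (W :\ v) u| + e u v.
  move=> u uWv; rewrite (cardsD1 v) addnC; congr (_ + _).
    apply: eq_card => z; rewrite !inE; by case: (z == v); case: (z \in W).
  by rewrite !inE vW.
rewrite (eq_bigr _ E) big_split /=.
have -> : \sum_(u in W :\ v) (e u v : nat) = #|nb W v|.
  rewrite -cardsum; apply: eq_card => u; rewrite !inE sym.
  case: (boolP (u == v)) => [/eqP -> | _] /=; last by [].
  by rewrite irr andbF.
lia.
Qed.

Lemma mindeg (W0 : {set T}) N : 0 < #|W0| -> N * #|W0| <= sW W0 -> 0 < N ->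
  exists W : {set T}, 0 < #|W| /\ forall v, v \in W -> N < 2 * #|nb W v|.
Proof.
move=> W00 HW0 N0.
pose Pw := fun W : {set T} => (0 < #|W|) && (N * #|W| <= sW W).
have P0 : Pw W0 by rewrite /Pw W00 HW0.
case: (arg_minnP (fun W : {set T} => #|W|) P0) => W /andP [Wpos HW] Wmin.
exists W; split => // v vW; rewrite ltnNge; apply/negP => H.
have E := sW_del vW.
have cW := cardsD1 v W; rewrite vW in cW.
case: (boolP (0 < #|W :\ v|)) => Wv.
  have : Pw (W :\ v).
    rewrite /Pw Wv /=; rewrite cW mulnDr in HW; lia.
  move/Wmin; lia.
have W1 : #|W :\ v| = 0 by lia.
have nbv : #|nb W v| <= #|W :\ v|.
  apply: subset_leq_card; apply/subsetP => u; rewrite !inE => /andP [uW evu]; rewrite uW andbT.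
  apply/eqP => uv; subst u; by rewrite irr in evu.
have s0 : sW (W :\ v) = 0.
  rewrite /sW; apply: big_pred0 => u; apply/negP => uWv.
  have : 0 < #|W :\ v| by apply/card_gt0P; exists u.
  by rewrite W1.
rewrite cW W1 in HW; lia.
Qed.

End Deg.

From Stdlib Require Import Reals Lra ZArith.

Lemma INR_leq (n m : nat) : (n <= m)%nat -> (INR n <= INR m)%R.
Proof. move/leP; exact: le_INR. Qed.

Lemma INR_muln (n m : nat) : INR (n * m) = (INR n * INR m)%R.
Proof. by rewrite -mult_INR multE. Qed.

Lemma INR_addn (n m : nat) : INR (n + m) = (INR n + INR m)%R.
Proof. by rewrite -plus_INR plusE. Qed.

Lemma INR_expn (n k : nat) : INR (expn n k) = (INR n ^ k)%R.
Proof. elim: k => [|k IH]; first by rewrite expn0. by rewrite expnS INR_muln IH. Qed.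

Lemma le_div (a b c : R) : (0 < c)%R -> (a * c <= b)%R -> (a <= b / c)%R.
Proof.
move=> c0 H; apply: (Rmult_le_reg_r c) => //.
rewrite /Rdiv Rmult_assoc Rinv_l; lra.
Qed.

Open Scope R_scope.

Lemma finish (T : finType) (e : rel T) (k t : R) (N K : nat) (X Y : {set T}) (N0 : T -> {set T}) :
  INR N <= k -> k < INR N + 1 -> t <= INR K ->
  (1000 * 1000 * 1000 * 1000 * 1000 * 1000 * 1000 <= K)%nat ->
  (expn K 5 <= 32 * N)%nat -> (N < expn K 5)%nat ->
  [disjoint X & Y] -> (#|Y| <= #|X|)%nat -> (0 < #|X|)%nat ->
  (forall x, x \in X -> N0 x \subset Y /\ (N %/ 2 <= #|N0 x|)%nat) ->
  (forall x y, x \in X -> y \in N0 x -> e x y) ->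
  (exists (A B : {set T}) (F : {set {set T}}),
      [/\ is_subgraph e (A :|: B) F, bipartite_with A B F,
          avg_deg (A :|: B) F >= k / 4,
          (forall v, v \in A -> INR (deg F v) <= k) &
          INR #|A| >= k ^ 6 * INR #|B| ])
  \/
  (exists (V : {set T}) (F : {set {set T}}),
      [/\ is_subgraph e V F, C4_free F & avg_deg V F >= t]).
Proof.
move=> Nk kN tK hK hN1 hN2 dXY hYX hX HN0 Hedge.
have N62 : (62 <= N)%nat.
  have : (K <= expn K 5)%nat by rewrite expnS; apply: leq_pmulr; rewrite expn_gt0; apply/orP; left; lia.
  lia.
have k0 : 0 <= k by have := pos_INR N; lra.
case: (core hK hN1 hN2 dXY hYX hX HN0) =>
  [[A [B [S [AX BY A0 HS HAB]]]] | [C [V [S [CX VY HS Hpair [Hfin C0]]]]]].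
- left.
  have dAB : [disjoint A & B] := disjointW AX BY dXY.
  have SB : forall a, a \in A -> S a \subset B.
    move=> a aA; have [h _] := HS a aA; apply: subset_trans h _; exact: subsetIr.
  have He : forall a y, a \in A -> y \in S a -> e a y.
    move=> a y aA yS; have [h _] := HS a aA.
    apply: Hedge; first exact: (subsetP AX).
    by move: (subsetP h y yS); rewrite in_setI; case/andP.
  exists A, B, (star A S); split.
  + exact: star_sub dAB SB He.
  + exact: star_bip dAB SB.
  + have cF : #|star A S| = (#|A| * (N %/ 7))%nat.
      rewrite (star_card dAB SB) (eq_bigr (fun _ => N %/ 7)); first by rewrite sum_nat_const.
      move=> a aA; by have [_ ->] := HS a aA.
    have nat1 : (N.+1 * (#|A| + #|B|) <= 8 * (#|A| * (N %/ 7)))%nat.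
      have h1 : (N.+1 * #|B| <= #|A|)%nat.
        apply: leq_trans HAB; rewrite leq_mul2r; apply/orP; right.
        rewrite expnS; apply: leq_pmulr; by rewrite expn_gt0.
      have h2 : ((N + 2) * #|A| <= (8 * (N %/ 7)) * #|A|)%nat.
        rewrite leq_mul2r; apply/orP; right; lia.
      lia.
    rewrite /avg_deg cardAB // ifF; last by apply/negbTE; rewrite -lt0n; lia.
    apply: Rle_ge; rewrite cF; apply: le_div.
      apply: lt_0_INR; apply/ltP; lia.
    have := INR_leq nat1; rewrite !INR_muln INR_addn => H.
    have hk : k * INR (#|A| + #|B|) <= INR N.+1 * INR (#|A| + #|B|).
      apply: Rmult_le_compat_r; [exact: pos_INR | rewrite S_INR; lra].
    rewrite INR_addn in hk.
    have e8 : INR 8 = 8 by rewrite INR_IZR_INZ.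
    rewrite e8 in H; lra.
  + move=> v vA; rewrite (star_deg dAB SB vA).
    have [_ ->] := HS v vA.
    apply: Rle_trans Nk; apply: INR_leq; lia.
  + apply: Rle_ge.
    have h1 : k ^ 6 <= INR N.+1 ^ 6.
      apply: pow_incr; rewrite S_INR; lra.
    have h2 : INR (expn N.+1 6 * #|B|) <= INR #|A| := INR_leq HAB.
    rewrite INR_muln INR_expn in h2.
    apply: Rle_trans h2; apply: Rmult_le_compat_r; [exact: pos_INR | exact: h1].
- right.
  have dCV : [disjoint C & V] := disjointW CX VY dXY.
  have SV : forall c, c \in C -> S c \subset V.
    move=> c cC; have [h _] := HS c cC; apply: subset_trans h _; exact: subsetIr.
  have He : forall a y, a \in C -> y \in S a -> e a y.
    move=> a y aC yS; have [h _] := HS a aC.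
    apply: Hedge; first exact: (subsetP CX).
    by move: (subsetP h y yS); rewrite in_setI; case/andP.
  exists (C :|: V), (star C S); split.
  + exact: star_sub dCV SV He.
  + exact: star_C4 dCV SV Hpair.
  + have cF : #|star C S| = (#|C| * (500 * K))%nat.
      rewrite (star_card dCV SV) (eq_bigr (fun _ => 500 * K)%nat); first by rewrite sum_nat_const.
      move=> a aC; by have [_ ->] := HS a aC.
    rewrite /avg_deg cardAB // ifF; last by apply/negbTE; rewrite -lt0n; lia.
    apply: Rle_ge; rewrite cF; apply: Rle_trans tK _; apply: le_div.
      apply: lt_0_INR; apply/ltP; lia.
    have := INR_leq Hfin; rewrite !INR_muln INR_addn => H.
    have e2 : INR 2 = 2 by rewrite INR_IZR_INZ.
    rewrite e2 in H; lra.
Qed.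

Open Scope R_scope.

Lemma nat_floor (k : R) : 0 <= k -> exists N : nat, INR N <= k < INR N + 1.
Proof.
move=> k0; have [h1 h2] := base_Int_part k.
have z0 : (0 <= Int_part k)%Z.
  have : (-1 < Int_part k)%Z by apply: lt_IZR; lra.
  lia.
exists (Z.to_nat (Int_part k)); rewrite INR_IZR_INZ (Z2Nat.id _ z0); lra.
Qed.

Lemma le_div_inv (a b c : R) : 0 < c -> a <= b / c -> a * c <= b.
Proof.
move=> c0 H; have := Rmult_le_compat_r c _ _ (Rlt_le _ _ c0) H.
rewrite /Rdiv Rmult_assoc Rinv_l; lra.
Qed.

Theorem corollary11 :
  exists k0 : R, forall k : R, k0 <= k -> forall t : R, t <= Rpower k (1/5) ->
  forall (T : finType) (e : rel T), symmetric e -> irreflexive e -> bipartite e ->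
  avg_deg [set: T] (graph_edges e) >= k ->
  (exists (A B : {set T}) (F : {set {set T}}),
      [/\ is_subgraph e (A :|: B) F, bipartite_with A B F,
          avg_deg (A :|: B) F >= k / 4,
          (forall v, v \in A -> INR (deg F v) <= k) &
          INR #|A| >= k ^ 6 * INR #|B| ])
  \/
  (exists (V : {set T}) (F : {set {set T}}),
      [/\ is_subgraph e V F, C4_free F & avg_deg V F >= t]).
Proof.
pose M := (1000 * 1000 * 1000 * 1000 * 1000 * 1000 * 1000)%nat.
exists (INR (expn M 5) + 1).
move=> k Hk t Ht T e sym irr bip Havg.
have kpos : 1 <= k by have := pos_INR (expn M 5); lra.
have [N [Nk kN]] : exists N : nat, INR N <= k < INR N + 1 by apply: nat_floor; lra.
have MN : (expn M 5 < N)%nat by apply/ltP; apply: INR_lt; lra.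
have exK : exists K, (N < expn K 5)%nat.
  exists N.+1; rewrite expnS; apply: leq_pmulr; by rewrite expn_gt0.
case: (ex_minnP exK) => K HK Kmin.
have K0 : (0 < K)%nat.
  rewrite lt0n; apply/negP => /eqP K0; move: HK; rewrite K0 exp0n; [by [] | by []].
have HK' : (expn K.-1 5 <= N)%nat.
  rewrite leqNgt; apply/negP => H; have := Kmin _ H; lia.
have MK : (M < K)%nat.
  rewrite -(ltn_exp2r M K (isT : (0 < 5)%nat)); exact: ltn_trans MN HK.
have hK : (M <= K)%nat by apply: ltnW.
have hN1 : (expn K 5 <= 32 * N)%nat.
  have K2 : (K <= 2 * K.-1)%nat by rewrite /M in MK; lia.
  apply: leq_trans (_ : (expn (2 * K.-1) 5 <= _)%nat); first by rewrite leq_exp2r.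
  rewrite expnMn; rewrite (_ : expn 2 5 = 32)%nat; last by [].
  by rewrite leq_mul2l HK' orbT.
have Kpos : 0 < INR K by apply: lt_0_INR; apply/ltP.
have tK : t <= INR K.
  have kK : k <= INR K ^ 5.
    rewrite -INR_expn; apply: Rle_trans (_ : INR N.+1 <= _).
      rewrite S_INR; lra.
    exact: INR_leq.
  have E : Rpower (INR K ^ 5) (1/5) = INR K.
    rewrite -Rpower_pow // Rpower_mult.
    have -> : INR 5 * (1/5) = 1 by rewrite INR_IZR_INZ /=; field.
    exact: Rpower_1.
  apply: Rle_trans Ht _; rewrite -{1}E; apply: Rle_Rpower_l; lra.
have n0 : (0 < #|T|)%nat.
  move: Havg; rewrite /avg_deg cardsT; case: eqP => [_ H | h _]; [lra | lia].
have E2 : (N * #|T| <= 2 * #|graph_edges e|)%nat.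
  move: Havg; rewrite /avg_deg cardsT ifF; last by apply/eqP; lia.
  move=> H; apply Rge_le in H.
  have n0R : 0 < INR #|T| by apply: lt_0_INR; apply/ltP.
  have H' := le_div_inv n0R H.
  have : INR (N * #|T|) <= INR (2 * #|graph_edges e|).
    rewrite !INR_muln; have e2 : INR 2 = 2 by rewrite INR_IZR_INZ.
    rewrite e2; apply: Rle_trans H'; apply: Rmult_le_compat_r; [exact: pos_INR | lra].
  move/INR_le/leP; by [].
have sWT : (2 * #|graph_edges e| <= sW e setT)%nat.
  apply: leq_trans (edges_le sym) _; apply: eq_leq; rewrite /sW.
  apply: eq_big => [v | v _]; first by rewrite inE.
  by apply: eq_card => u; rewrite !inE.
have Npos : (0 < N)%nat by lia.
have c0 : (0 < #|[set: T]|)%nat by rewrite cardsT.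
have c1 : (N * #|[set: T]| <= sW e setT)%nat by rewrite cardsT; exact: leq_trans E2 sWT.
have [W [W0 HW]] := mindeg sym irr c0 c1 Npos.
case: bip => P [Q [dPQ PQ Hb]].
have side : forall (P1 Q1 : {set T}), [disjoint P1 & Q1] ->
    (forall x y, e x y -> (x \in P1 /\ y \in Q1) \/ (x \in Q1 /\ y \in P1)) ->
    forall x, x \in W :&: P1 -> nb e W x \subset W :&: Q1 /\ (N %/ 2 <= #|nb e W x|)%nat.
  move=> P1 Q1 d H x; rewrite in_setI => /andP [xW xP]; split.
    apply/subsetP => u; rewrite /nb inE => /andP [uW exu]; rewrite in_setI uW /=.
    case: (H x u exu) => [[_ ->] | [xQ _]]; first by [].
    exfalso; move: d => /disjoint_setI0 /setP /(_ x); by rewrite !inE xP xQ.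
  have := HW x xW; lia.
have hedge : forall (P1 : {set T}) x y, x \in W :&: P1 -> y \in nb e W x -> e x y.
  by move=> P1 x y _; rewrite /nb inE => /andP [].
have cXY : (#|W :&: P| + #|W :&: Q| = #|W|)%nat.
  rewrite -cardsUI.
  have -> : (W :&: P) :&: (W :&: Q) = set0.
    apply/setP => x; rewrite !inE; apply/negP => /andP [/andP [_ xP] /andP [_ xQ]].
    move: dPQ => /disjoint_setI0 /setP /(_ x); by rewrite !inE xP xQ.
  by rewrite -setIUr PQ setIT cards0 addn0.
have dXY : [disjoint W :&: P & W :&: Q] := disjointW (subsetIr W P) (subsetIr W Q) dPQ.
case: (leqP #|W :&: Q| #|W :&: P|) => HPQ.
  have X0 : (0 < #|W :&: P|)%nat by lia.
  exact: (finish Nk kN tK hK hN1 HK dXY HPQ X0 (side P Q dPQ Hb) (hedge P)).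
have X0 : (0 < #|W :&: Q|)%nat by lia.
have Hb' : forall x y, e x y -> (x \in Q /\ y \in P) \/ (x \in P /\ y \in Q).
  by move=> x y /Hb [] ?; [right | left].
have dQP : [disjoint Q & P] by rewrite disjoint_sym.
have dYX : [disjoint W :&: Q & W :&: P] by rewrite disjoint_sym.
exact: (finish Nk kN tK hK hN1 HK dYX (ltnW HPQ) X0 (side Q P dQP Hb') (hedge Q)).
Qed.
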